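(* Let $P$ be a finite set of $m$ points in the plane, $\mathcal{R}$ a finite family of axis-aligned rectangles, $k\ge1$ an integer and $\alpha$ an integer with $1\le\alpha\le k$. Let $m^*$ be the maximum number of points of $P$ that can be exposed by deleting $k$ rectangles from $\mathcal{R}$, and let $m'$ be the value returned by the algorithm Greedy-Bicriteria with parameter $\alpha$. Then there is an absolute constant $c>0$ such that $m'\ge \alpha m^*/(ck^2)$; moreover the algorithm deletes at most $\alpha k$ rectangles, and the $m'$ points counted are exposed after these deletions.
   Context: A point $p$ is exposed with respect to a family $\mathcal{R}'$ of ranges if it lies in no range of $\mathcal{R}'$. For $p\in P$, $\mathcal{R}(p)$ denotes the set of rectangles in $\mathcal{R}$ containing $p$. Algorithm Greedy-Bicriteria: first discard all points $p$ with $|\mathcal{R}(p)|>k$. Partition the remaining points into groups (equivalence classes) $G_1,G_2,\dots$, where two points $p,p'$ lie in the same group iff $\mathcal{R}(p)=\mathcal{R}(p')$. Sort the groups so that $|G_1|\ge|G_2|\ge\cdots$, delete all rectangles containing the points of the first $\alpha$ groups, and return $m'=\sum_{1\le i\le\alpha}|G_i|$ as the number of exposed points. *)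

(* Defs.v *)
From HB Require Import structures.
From mathcomp Require Import all_boot all_order all_algebra.
From mathcomp Require Export reals.
Set Implicit Arguments. Unset Strict Implicit. Unset Printing Implicit Defensive.
Import Order.TTheory GRing.Theory Num.Theory.
Local Open Scope ring_scope.

Record rect (R : realType) := Rect { xl : R; xr : R; yl : R; yr : R }.

Definition rect_wf (R : realType) (r : rect R) : bool :=
  (xl r <= xr r) && (yl r <= yr r).

Definition in_rect (R : realType) (r : rect R) (q : R * R) : bool :=
  (xl r <= q.1 <= xr r) && (yl r <= q.2 <= yr r).

Section Greedy.
Variables (R : realType) (m n : nat) (pts : 'I_m -> R * R) (rs : 'I_n -> rect R).

Definition Rof (p : 'I_m) : {set 'I_n} := [set i | in_rect (rs i) (pts p)].

Definition exposed (F : {set 'I_n}) (p : 'I_m) : bool :=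
  [forall i in F, ~~ in_rect (rs i) (pts p)].

Definition mstar (k : nat) : nat :=
  \max_(D : {set 'I_n} | (#|D| <= k)%N) #|[set p | exposed (~: D) p]|.

(* points surviving the first step of Greedy-Bicriteria *)
Definition kept (k : nat) : {set 'I_m} := [set p | #|Rof p| <= k]%N.

(* the groups (equivalence classes), each identified by its common R(p) *)
Definition groups (k : nat) : {set {set 'I_n}} := [set Rof p | p in kept k].

Definition group (k : nat) (K : {set 'I_n}) : {set 'I_m} :=
  [set p in kept k | Rof p == K].

(* S is the set of the first alpha groups of some ordering of the groups
   by non-increasing size (any tie-breaking). *)
Definition greedy_choice (k alpha : nat) (S : {set {set 'I_n}}) : Prop :=
  [/\ S \subset groups k,
      #|S| = minn alpha #|groups k| &
      forall K K', K \in S -> K' \in groups k :\: S ->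
        (#|group k K'| <= #|group k K|)%N].

(* rectangles deleted by the algorithm: all those containing the points of
   the chosen groups *)
Definition deleted (S : {set {set 'I_n}}) : {set 'I_n} := \bigcup_(K in S) K.

Definition mprime (k : nat) (S : {set {set 'I_n}}) : nat :=
  (\sum_(K in S) #|group k K|)%N.

Definition counted (k : nat) (S : {set {set 'I_n}}) : {set 'I_m} :=
  \bigcup_(K in S) group k K.

End Greedy.

(* Main.v *)
Require Import Defs.
From HB Require Import structures.
From mathcomp Require Import all_boot all_order all_algebra.
From mathcomp Require Import reals.
From mathcomp Require Import zify.
Import Order.TTheory GRing.Theory Num.Theory.

Set Implicit Arguments. Unset Strict Implicit. Unset Printing Implicit Defensive.

Section OneD.
Local Open Scope ring_scope.
Variables (R : realType) (n : nat) (a b : 'I_n -> R) (D : {set 'I_n}).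

Definition phi (x : R) : nat :=
  addn (addn (addn #|[set i in D | a i <= x]| #|[set i in D | a i < x]|)
   #|[set i in D | b i <= x]|) #|[set i in D | b i < x]|.

Definition sig (x : R) : {set 'I_n} := [set i in D | (a i <= x) && (x <= b i)].

Lemma phi_le x : (phi x <= 4 * #|D|)%N.
Proof.
rewrite /phi.
have h : forall P : pred 'I_n, (#|[set i in D | P i]| <= #|D|)%N.
  by move=> P; apply: subset_leq_card; apply/subsetP => i; rewrite inE => /andP[].
have := h (fun i => a i <= x); have := h (fun i => a i < x);
have := h (fun i => b i <= x); have := h (fun i => b i < x). lia.
Qed.

Lemma phi_sig_lt x y : x < y -> phi x = phi y -> sig x = sig y.
Proof.
move=> xy ph.
have mono : forall (f : 'I_n -> R) (strict : bool),
   [set i in D | if strict then f i < x else f i <= x] \subset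
   [set i in D | if strict then f i < y else f i <= y].
  move=> f [] ; apply/subsetP => i; rewrite !inE => /andP[-> h] /=.
    exact: lt_trans h xy.
  exact: le_trans h (ltW xy).
have c1 : leq #|[set i in D | a i <= x]| #|[set i in D | a i <= y]| :=
  subset_leq_card (mono a false).
have c2 : leq #|[set i in D | a i < x]| #|[set i in D | a i < y]| :=
  subset_leq_card (mono a true).
have c3 : leq #|[set i in D | b i <= x]| #|[set i in D | b i <= y]| :=
  subset_leq_card (mono b false).
have c4 : leq #|[set i in D | b i < x]| #|[set i in D | b i < y]| :=
  subset_leq_card (mono b true).
have nof : forall f : 'I_n -> R, f = a \/ f = b ->
   forall i, i \in D -> x <= f i -> f i <= y -> False.
  move=> f hf i iD h1 h2.
  case: (ltP (f i) y) => h3.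
    have pr : [set i in D | f i < x] \proper [set i in D | f i < y].
      apply/properP; split; first exact: (mono f true).
      by exists i; rewrite !inE iD //= ltNge h1.
    have := proper_card pr.
    move: ph; rewrite /phi; case: hf => -> ; lia.
  have e : f i = y by apply/eqP; rewrite eq_le h2 h3.
  have pr : [set i in D | f i <= x] \proper [set i in D | f i <= y].
    apply/properP; split; first exact: (mono f false).
    exists i; first by rewrite !inE iD /= e; apply: le_refl.
    by rewrite !inE iD /= e -ltNge.
  have := proper_card pr.
  move: ph; rewrite /phi; case: hf => -> ; lia.
apply/setP => i; rewrite !inE; case iD: (i \in D) => //=.
have h1 : (a i <= x) = (a i <= y).
  apply/idP/idP => h; first exact: le_trans h (ltW xy).
  case: (leP (a i) x) => // h'; exfalso; apply: (nof a (or_introl erefl) i iD) => //.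
  exact: ltW.
have h2 : (x <= b i) = (y <= b i).
  apply/idP/idP => h; last exact: le_trans (ltW xy) h.
  case: (leP y (b i)) => // h'; exfalso; apply: (nof b (or_intror erefl) i iD) => //.
  exact: ltW.
by rewrite h1 h2.
Qed.

Lemma phi_sig x y : phi x = phi y -> sig x = sig y.
Proof.
move=> ph; case: (ltgtP x y) => [xy|yx|->] //.
  exact: phi_sig_lt.
by apply/esym/phi_sig_lt.
Qed.

End OneD.

Lemma card_bigcup_leq (I T : finType) (P : pred I) (F : I -> {set T}) :
  (#|\bigcup_(i | P i) F i| <= \sum_(i | P i) #|F i|)%N.
Proof.
elim/big_rec2: _ => [|i n U _ h]; first by rewrite cards0.
by rewrite (leq_trans (leq_card_setU (F i) U).1) ?leq_add2l.
Qed.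

Lemma sum_subset (T : finType) (A B : {set T}) (f : T -> nat) :
  A \subset B -> (\sum_(i in A) f i <= \sum_(i in B) f i)%N.
Proof.
move=> sAB; rewrite [X in (_ <= X)%N](big_setID A) /= (setIidPr sAB); exact: leq_addr.
Qed.

Section Main.
Variables (R : realType) (m n : nat) (pts : 'I_m -> R * R) (rs : 'I_n -> rect R).

Lemma exposed_sub (D : {set 'I_n}) p : exposed pts rs (~: D) p -> Rof pts rs p \subset D.
Proof.
move=> /forallP ex; apply/subsetP => i; rewrite inE => ir.
have := ex i; rewrite inE ir implybF negbK; exact.
Qed.

Lemma Rof_sig (D : {set 'I_n}) p : Rof pts rs p \subset D ->
  Rof pts rs p = sig (fun i => xl (rs i)) (fun i => xr (rs i)) D (pts p).1
             :&: sig (fun i => yl (rs i)) (fun i => yr (rs i)) D (pts p).2.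
Proof.
move=> /subsetP sub; apply/setP => i; rewrite !inE.
case iD: (i \in D); last first.
  by apply/negbTE; apply: contraFN iD => h; apply: sub; rewrite inE.
by rewrite /in_rect /=.
Qed.

Lemma card_types (D : {set 'I_n}) :
  (#|[set Rof pts rs p | p in [set p | exposed pts rs (~: D) p]]|
     <= (4 * #|D|).+1 ^ 2)%N.
Proof.
set E := [set p | exposed pts rs (~: D) p].
set N := (4 * #|D|).+1.
pose px p := phi (fun i => xl (rs i)) (fun i => xr (rs i)) D (pts p).1.
pose py p := phi (fun i => yl (rs i)) (fun i => yr (rs i)) D (pts p).2.
pose g p : 'I_N * 'I_N := (inord (px p), inord (py p)).
pose h z : {set 'I_n} := if [pick q in E | g q == z] is Some q then Rof pts rs q else set0.
have sub : [set Rof pts rs p | p in E] \subset [set h z | z in [set g p | p in E]].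
  apply/subsetP => K /imsetP [p pE ->].
  apply/imsetP; exists (g p); first by apply/imsetP; exists p.
  rewrite /h; case: pickP => [q /andP [qE /eqP gq]|]; last by move=> /(_ p); rewrite pE eqxx.
  have [e1 e2] : px q = px p /\ py q = py p.
    case: gq => /(congr1 (@nat_of_ord N)) e1 /(congr1 (@nat_of_ord N)) e2.
    rewrite !inordK ?ltnS ?phi_le // in e1 e2.
  move: pE qE; rewrite !inE => /exposed_sub pD /exposed_sub qD.
  by rewrite (Rof_sig pD) (Rof_sig qD) (phi_sig e1) (phi_sig e2).
apply: (leq_trans (subset_leq_card sub)); apply: (leq_trans (leq_imset_card _ _)).
apply: (leq_trans (subset_leq_card (subsetT _))).
by rewrite cardsT card_prod card_ord.
Qed.

End Main.

Theorem mainTheorem6 :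
  exists c : nat, (0 < c)%N /\
  forall (R : realType) (m n : nat) (pts : 'I_m -> R * R) (rs : 'I_n -> rect R),
    injective pts ->
    (forall i, rect_wf (rs i)) ->
    forall (k alpha : nat), (1 <= k)%N -> (1 <= alpha <= k)%N ->
    forall S : {set {set 'I_n}}, greedy_choice pts rs k alpha S ->
      [/\ (alpha * mstar pts rs k <= c * k ^ 2 * mprime pts rs k S)%N,
          (#|deleted S| <= alpha * k)%N,
          #|counted pts rs k S| = mprime pts rs k S &
          forall p, p \in counted pts rs k S -> exposed pts rs (~: deleted S) p].
Proof.
exists 26; split => // R m n pts rs _ _ k alpha k1 /andP [a1 ak] S [sS cS exS].
have Ssmall : forall K, K \in S -> (#|K| <= k)%N.
  move=> K /(subsetP sS) /imsetP [p]; rewrite inE => pk ->; exact: pk.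
have grpRof : forall K p, p \in group pts rs k K -> Rof pts rs p = K.
  by move=> K p; rewrite inE => /andP [_ /eqP].
split.
-
  rewrite /mstar (@bigop.bigmax_eq_arg _ set0) ?cards0 //.
  case: arg_maxnP => [|D Dk _]; first by rewrite cards0.
  set E := [set p | exposed pts rs (~: D) p].
  set T := [set Rof pts rs p | p in E].
  pose g K := #|group pts rs k K|.
  have TG : T \subset groups pts rs k.
    apply/subsetP => K /imsetP [p pE ->]; apply/imsetP; exists p => //.
    rewrite inE; apply: leq_trans Dk; apply: subset_leq_card.
    by move: pE; rewrite inE => /exposed_sub.
  have ET : (#|E| <= \sum_(K in T) g K)%N.
    apply: leq_trans (card_bigcup_leq _ _).
    apply: subset_leq_card; apply/subsetP => p pE; apply/bigcupP.
    exists (Rof pts rs p); first by apply/imsetP; exists p.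
    rewrite inE eqxx andbT inE; apply: leq_trans Dk; apply: subset_leq_card.
    by move: pE; rewrite inE => /exposed_sub.
  have cT : (#|T| <= 25 * k ^ 2)%N.
    apply: leq_trans (card_types pts rs D) _.
    have : (#|D| <= k)%N := Dk. nia.
  rewrite /mprime -/g.
  set X := (\sum_(K in S) g K)%N.
  have [aG|Ga] := leqP alpha #|groups pts rs k|.
  + have cSa : #|S| = alpha by rewrite cS; apply/minn_idPl.
    have e1 : (\sum_(K in T :&: S) g K <= X)%N by apply: sum_subset; exact: subsetIr.
    have e2 : (alpha * \sum_(K in T :\: S) g K <= #|T| * X)%N.
      rewrite big_distrr /=.
      apply: (@leq_trans (\sum_(K in T :\: S) X)).
        apply: leq_sum => K' K'TS.
        rewrite -cSa -sum_nat_const /X; apply: leq_sum => K KS.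
        apply: exS => //.
        move: K'TS; rewrite !inE => /andP [-> K'T] /=.
        exact: (subsetP TG).
      rewrite sum_nat_const; apply: leq_mul => //; apply: subset_leq_card.
      exact: subsetDl.
    have e3 : \sum_(K in T) g K = (\sum_(K in T :&: S) g K + \sum_(K in T :\: S) g K)%N by rewrite (big_setID S).
    apply: (@leq_trans (alpha * \sum_(K in T) g K)); first by apply: leq_mul.
    rewrite e3 mulnDr.
    have : (alpha * \sum_(K in T :&: S) g K <= k * X)%N by apply: leq_mul.
    move: e2 cT k1; nia.
  + have cSg : #|S| = #|groups pts rs k| by rewrite cS; apply/minn_idPr/ltnW.
    have SG : S = groups pts rs k by apply/eqP; rewrite eqEcard sS cSg leqnn.
    have e1 : (\sum_(K in T) g K <= X)%N by apply: sum_subset; rewrite SG.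
    apply: (@leq_trans (alpha * \sum_(K in T) g K)); first by apply: leq_mul.
    have : (alpha * \sum_(K in T) g K <= k * X)%N by apply: leq_mul.
    move: k1; nia.
-
  apply: leq_trans (card_bigcup_leq _ _) _.
  apply: (@leq_trans (\sum_(K in S) k)); first by apply: leq_sum.
  rewrite sum_nat_const; apply: leq_mul => //.
  by rewrite cS geq_minl.
-
  rewrite /counted /mprime.
  have -> : \bigcup_(K in S) group pts rs k K =
            \bigcup_K (if K \in S then group pts rs k K else set0).
    by rewrite big_mkcond.
  rewrite -sum1_card partition_disjoint_bigcup.
    rewrite [RHS]big_mkcond /=; apply: eq_bigr => K _.
    by case: ifP => _; rewrite sum1_card ?cards0.
  move=> K K' KK'; rewrite disjoints_subset; apply/subsetP => p.
  case: ifP => _; last by rewrite inE.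
  case: ifP => _; last by rewrite !inE.
  move=> /grpRof e; rewrite inE; apply/negP => /grpRof e'.
  by rewrite -e -e' eqxx in KK'.
-
  move=> p /bigcupP [K KS pK]; apply/forallP => i; apply/implyP; rewrite inE => nid.
  apply/negP => ir; apply: (negP nid); apply/bigcupP; exists K => //.
  by rewrite -(grpRof _ _ pK) inE.
Qed.
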